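(* Let $G,H,K,L$ be graphs with $G\mid K$ and $H\mid L$. If $K$ and $L$ are strongly disjoint, then $G$ and $H$ are strongly disjoint. If $K$ and $L$ are weakly disjoint, then $G$ and $H$ are weakly disjoint.
   Context: A weight function on finite $U$ is $\alpha:U\times U\to\mathbb{R}$, $\alpha\ge0$, symmetric, summing to $1$; degree $p(u)=\sum_{u'}\alpha(u,u')$; a graph is $(U,\alpha)$. For graphs $G=(U,\alpha)$, $H=(V,\beta)$ with degrees $p,q$, $H\mid G$ means there is a surjective $\phi:U\to V$ with (i) $q(v)=\sum_{u\in\phi^{-1}(v)}p(u)$ for all $v$, and (ii) $q(v)\sum_{u'\in\phi^{-1}(v')}\alpha(u,u')=p(u)\beta(v,v')$ for all $v,v'$, $u\in\phi^{-1}(v)$. A weight joining of $\alpha,\beta$ is a weight function $\gamma$ on $U\times V$ with degree $r(u,v)=\sum_{(u',v')}\gamma((u,v),(u',v'))$ such that $\sum_v r(u,v)=p(u)$, $\sum_u r(u,v)=q(v)$, $p(u)\sum_{\tilde v}\gamma((u,v),(u',\tilde v))=\alpha(u,u')r(u,v)$ and $q(v)\sum_{\tilde u}\gamma((u,v),(\tilde u,v'))=\beta(v,v')r(u,v)$ for all $u,u',v,v'$. Graphs $(U,\alpha),(V,\beta)$ are strongly disjoint if the only weight joining is $\alpha\otimes\beta$, $(\alpha\otimes\beta)((u,v),(u',v'))=\alpha(u,u')\beta(v,v')$; weakly disjoint if every weight joining has degree $r(u,v)=p(u)q(v)$. *)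

(* Defs.v *)
From HB Require Import structures.
From mathcomp Require Import all_boot all_order all_algebra.
Set Implicit Arguments. Unset Strict Implicit. Unset Printing Implicit Defensive.
Import Order.TTheory GRing.Theory Num.Theory.
Local Open Scope ring_scope.

Section Graphs.
Variable R : realFieldType.

Definition is_weight (U : finType) (alpha : U -> U -> R) : Prop :=
  [/\ forall u u', 0 <= alpha u u',
      forall u u', alpha u u' = alpha u' u
    & \sum_(u : U) \sum_(u' : U) alpha u u' = 1].

Definition deg (U : finType) (alpha : U -> U -> R) (u : U) : R :=
  \sum_(u' : U) alpha u u'.

(* gdiv alpha beta : (V,beta) | (U,alpha), i.e. H | G with G=(U,alpha), H=(V,beta) *)
Definition gdiv (U V : finType) (alpha : U -> U -> R) (beta : V -> V -> R) : Prop :=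
  exists phi : U -> V,
    [/\ forall v : V, exists u : U, phi u = v,
        forall v : V, deg beta v = \sum_(u | phi u == v) deg alpha u
      & forall (v v' : V) (u : U), phi u = v ->
          deg beta v * (\sum_(u' | phi u' == v') alpha u u')
          = deg alpha u * beta v v'].

Definition tensorw (U V : finType) (alpha : U -> U -> R) (beta : V -> V -> R)
  (x y : U * V) : R := alpha x.1 y.1 * beta x.2 y.2.

Definition weight_joining (U V : finType) (alpha : U -> U -> R) (beta : V -> V -> R)
  (gamma : U * V -> U * V -> R) : Prop :=
  [/\ is_weight gamma,
      forall u : U, \sum_(v : V) deg gamma (u, v) = deg alpha u,
      forall v : V, \sum_(u : U) deg gamma (u, v) = deg beta v,
      forall (u u' : U) (v : V),
        deg alpha u * (\sum_(vt : V) gamma (u, v) (u', vt)) = alpha u u' * deg gamma (u, v)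
    & forall (u : U) (v v' : V),
        deg beta v * (\sum_(ut : U) gamma (u, v) (ut, v')) = beta v v' * deg gamma (u, v)].

Definition strongly_disjoint (U V : finType) (alpha : U -> U -> R) (beta : V -> V -> R) : Prop :=
  forall gamma, weight_joining alpha beta gamma -> forall x y, gamma x y = tensorw alpha beta x y.

Definition weakly_disjoint (U V : finType) (alpha : U -> U -> R) (beta : V -> V -> R) : Prop :=
  forall gamma, weight_joining alpha beta gamma ->
    forall (u : U) (v : V), deg gamma (u, v) = deg alpha u * deg beta v.

End Graphs.

(* Main.v *)
Require Import Defs.
From mathcomp Require Import all_boot all_order all_algebra.
Set Implicit Arguments. Unset Strict Implicit. Unset Printing Implicit Defensive.
Import Order.TTheory GRing.Theory Num.Theory.
From mathcomp Require Import ring.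
Local Open Scope ring_scope.

Section Factor.
Variables (R : realFieldType) (U V : finType) (al : U -> U -> R) (be : V -> V -> R)
  (phi : U -> V).
Hypothesis Wal : is_weight al.
Hypothesis Wbe : is_weight be.
Hypothesis Hdeg : forall v : V, deg be v = \sum_(u | phi u == v) deg al u.
Hypothesis Hfac : forall (v v' : V) (u : U), phi u = v ->
          deg be v * (\sum_(u' | phi u' == v') al u u') = deg al u * be v v'.

Lemma al_ge0 u u' : 0 <= al u u'. Proof. by case: Wal. Qed.
Lemma be_ge0 v v' : 0 <= be v v'. Proof. by case: Wbe. Qed.
Lemma degal_ge0 u : 0 <= deg al u.
Proof. by apply: sumr_ge0 => *; apply: al_ge0. Qed.
Lemma degbe_ge0 v : 0 <= deg be v.
Proof. by apply: sumr_ge0 => *; apply: be_ge0. Qed.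

Lemma degal0 u : deg be (phi u) = 0 -> deg al u = 0.
Proof.
rewrite Hdeg => H; apply: (psumr_eq0P _ H) => //.
by move=> *; apply: degal_ge0.
Qed.

Lemma al0 u u' : deg al u = 0 -> al u u' = 0.
Proof. by move=> H; apply: (psumr_eq0P _ H) => // *; apply: al_ge0. Qed.

Lemma be0 v v' : deg be v = 0 -> be v v' = 0.
Proof. by move=> H; apply: (psumr_eq0P _ H) => // *; apply: be_ge0. Qed.

Lemma fibsum u v' : \sum_(u' | phi u' == v') al u u' = deg al u * be (phi u) v' / deg be (phi u).
Proof.
have [H|H] := eqVneq (deg be (phi u)) 0.
  rewrite H invr0 mulr0; apply: big1 => u' _; apply: al0; exact: degal0.
by rewrite -(Hfac v' (erefl _)) [deg be _ * _]mulrC mulfK.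
Qed.

Lemma al_be0 u u' : be (phi u) (phi u') = 0 -> al u u' = 0.
Proof.
move=> H; apply/eqP; rewrite eq_le al_ge0 andbT.
have : \sum_(u'' | phi u'' == phi u') al u u'' = 0 by rewrite fibsum H mulr0 mul0r.
move=> H2; rewrite (psumr_eq0P _ H2) //. by move=> *; apply: al_ge0.
Qed.

Lemma fibsum2 v v' : \sum_(u | phi u == v) \sum_(u' | phi u' == v') al u u' = be v v'.
Proof.
rewrite (eq_bigr (fun u => deg al u * (be v v' / deg be v))); last first.
  by move=> u /eqP <-; rewrite fibsum mulrA.
rewrite -big_distrl /= -Hdeg.
have [H|H] := eqVneq (deg be v) 0; last by rewrite mulrA mulrAC divff ?mul1r.
by rewrite H mul0r be0.
Qed.

End Factor.
Section Join.
Variables (R : realFieldType) (UG UH : finType) (a : UG -> UG -> R) (b : UH -> UH -> R)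
  (gamma : UG * UH -> UG * UH -> R).
Hypothesis Wa : is_weight a.
Hypothesis Wb : is_weight b.
Hypothesis J : weight_joining a b gamma.

Lemma gam_ge0 x y : 0 <= gamma x y. Proof. by case: J => -[]. Qed.
Lemma r_ge0 x : 0 <= deg gamma x.
Proof. by apply: sumr_ge0 => *; apply: gam_ge0. Qed.
Lemma gam0 x y : deg gamma x = 0 -> gamma x y = 0.
Proof. by move=> H; apply: (psumr_eq0P _ H) => // *; apply: gam_ge0. Qed.
Lemma r0a g h : deg a g = 0 -> deg gamma (g, h) = 0.
Proof.
case: J => _ H1 _ _ _; rewrite -H1 => H.
by apply: (psumr_eq0P _ H) => // *; apply: r_ge0.
Qed.
Lemma r0b g h : deg b h = 0 -> deg gamma (g, h) = 0.
Proof.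
case: J => _ _ H1 _ _; rewrite -H1 => H.
by apply: (psumr_eq0P (P := xpredT) (F := fun g => deg gamma (g, h)) _ H) => // *; apply: r_ge0.
Qed.
Lemma gam_a0 g g' h h' : a g g' = 0 -> gamma (g, h) (g', h') = 0.
Proof.
move=> H; have [H0|H0] := eqVneq (deg a g) 0; first by apply: gam0; apply: r0a.
case: J => _ _ _ H4 _; move: (H4 g g' h); rewrite H mul0r => /eqP.
rewrite mulf_eq0 (negbTE H0) /= => /eqP H5.
by apply: (psumr_eq0P (P := xpredT) (F := fun vt => gamma (g, h) (g', vt)) _ H5) => // *; apply: gam_ge0.
Qed.
Lemma gam_b0 g g' h h' : b h h' = 0 -> gamma (g, h) (g', h') = 0.
Proof.
move=> H; have [H0|H0] := eqVneq (deg b h) 0; first by apply: gam0; apply: r0b.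
case: J => _ _ _ _ H4; move: (H4 g h h'); rewrite H mul0r => /eqP.
rewrite mulf_eq0 (negbTE H0) /= => /eqP H5.
by apply: (psumr_eq0P (P := xpredT) (F := fun ut => gamma (g, h) (ut, h')) _ H5) => // *; apply: gam_ge0.
Qed.
End Join.
Section Lift.
Variables (R : realFieldType) (UG UH UK UL : finType)
  (a : UG -> UG -> R) (b : UH -> UH -> R) (c : UK -> UK -> R) (d : UL -> UL -> R)
  (phi : UK -> UG) (psi : UL -> UH) (gamma : UG * UH -> UG * UH -> R).
Hypotheses (Wa : is_weight a) (Wb : is_weight b) (Wc : is_weight c) (Wd : is_weight d).
Hypothesis Hdc : forall v, deg a v = \sum_(u | phi u == v) deg c u.
Hypothesis Hfc : forall v v' u, phi u = v ->
          deg a v * (\sum_(u' | phi u' == v') c u u') = deg c u * a v v'.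
Hypothesis Hdd : forall v, deg b v = \sum_(u | psi u == v) deg d u.
Hypothesis Hfd : forall v v' u, psi u = v ->
          deg b v * (\sum_(u' | psi u' == v') d u u') = deg d u * b v v'.
Hypothesis J : weight_joining a b gamma.

Definition Gam (x y : UK * UL) : R :=
  gamma (phi x.1, psi x.2) (phi y.1, psi y.2) * (c x.1 y.1 / a (phi x.1) (phi y.1))
  * (d x.2 y.2 / b (psi x.2) (psi y.2)).

Lemma sum_pair (I1 I2 : finType) (F : I1 * I2 -> R) : \sum_p F p = \sum_i \sum_j F (i, j).
Proof. by rewrite pair_bigA; apply: eq_bigr => -[]. Qed.

Lemma part_phi (F : UK -> R) : \sum_k F k = \sum_g \sum_(k | phi k == g) F k.
Proof. exact: (partition_big phi xpredT). Qed.
Lemma part_psi (F : UL -> R) : \sum_k F k = \sum_g \sum_(k | psi k == g) F k.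
Proof. exact: (partition_big psi xpredT). Qed.

Lemma sum_fib (F : UG -> UH -> R) (X : UK -> UG -> R) (Y : UL -> UH -> R) :
  \sum_k \sum_l F (phi k) (psi l) * X k (phi k) * Y l (psi l) =
  \sum_g \sum_h F g h * (\sum_(k | phi k == g) X k g) * (\sum_(l | psi l == h) Y l h).
Proof.
rewrite part_phi; apply: eq_bigr => g _.
rewrite (eq_bigr (fun k => \sum_h \sum_(l | psi l == h) F g h * X k g * Y l h)); last first.
  move=> k /eqP <-; rewrite part_psi; apply: eq_bigr => h _.
  by apply: eq_bigr => l /eqP ->.
rewrite exchange_big; apply: eq_bigr => h _.
rewrite mulrAC big_distrr /=; apply: eq_bigr => k _.
by rewrite mulrAC big_distrr.
Qed.

Lemma Lc g g' h h' Z k : phi k = g ->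
  gamma (g, h) (g', h') * ((\sum_(k' | phi k' == g') c k k') / a g g') * Z =
  gamma (g, h) (g', h') * (deg c k / deg a g) * Z.
Proof.
move=> Hk; congr (_ * _).
have [H|H] := eqVneq (a g g') 0; first by rewrite (gam_a0 J) // !mul0r.
by rewrite (fibsum Wc Hdc Hfc) Hk mulrAC mulfK.
Qed.

Lemma Ld g g' h h' Z l : psi l = h ->
  gamma (g, h) (g', h') * Z * ((\sum_(l' | psi l' == h') d l l') / b h h') =
  gamma (g, h) (g', h') * Z * (deg d l / deg b h).
Proof.
move=> Hl.
have [H|H] := eqVneq (b h h') 0; first by rewrite (gam_b0 J) // !mul0r.
congr (_ * _); by rewrite (fibsum Wd Hdd Hfd) Hl mulrAC mulfK.
Qed.

Lemma degGam k l : deg Gam (k, l) =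
  deg gamma (phi k, psi l) * (deg c k / deg a (phi k)) * (deg d l / deg b (psi l)).
Proof.
rewrite /deg sum_pair /=.
rewrite (sum_fib (fun g' h' => gamma (phi k, psi l) (g', h'))
           (fun k' g' => c k k' / a (phi k) g') (fun l' h' => d l l' / b (psi l) h')).
rewrite sum_pair !big_distrl /=; apply: eq_bigr => g' _.
rewrite !big_distrl /=; apply: eq_bigr => h' _.
by rewrite -!big_distrl /= Lc // Ld.
Qed.


Lemma Ma g h : deg gamma (g, h) * (deg a g / deg a g) = deg gamma (g, h).
Proof.
have [H|H] := eqVneq (deg a g) 0; first by rewrite (r0a J) // mul0r.
by rewrite divff // mulr1.
Qed.
Lemma Mb g h : deg gamma (g, h) * (deg b h / deg b h) = deg gamma (g, h).
Proof.
have [H|H] := eqVneq (deg b h) 0; first by rewrite (r0b J) // mul0r.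
by rewrite divff // mulr1.
Qed.
Lemma Sc g : \sum_(k | phi k == g) deg c k / deg a g = deg a g / deg a g.
Proof. by rewrite -big_distrl /= -Hdc. Qed.
Lemma Sd h : \sum_(l | psi l == h) deg d l / deg b h = deg b h / deg b h.
Proof. by rewrite -big_distrl /= -Hdd. Qed.

Lemma Gam_ge0 x y : 0 <= Gam x y.
Proof.
rewrite /Gam; apply: mulr_ge0; first apply: mulr_ge0.
- exact: (gam_ge0 J).
- by apply: divr_ge0; [apply: (al_ge0 Wc) | apply: (al_ge0 Wa)].
- by apply: divr_ge0; [apply: (al_ge0 Wd) | apply: (al_ge0 Wb)].
Qed.

Lemma Gam_sym x y : Gam x y = Gam y x.
Proof.
case: Wa => _ sa _; case: Wb => _ sb _; case: Wc => _ sc _; case: Wd => _ sd _.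
case: J => -[_ sg _] _ _ _ _.
by rewrite /Gam sa sb sc sd sg.
Qed.

Lemma Gam_sum : \sum_x \sum_y Gam x y = 1.
Proof.
rewrite (eq_bigr (fun x => deg Gam x)) // sum_pair.
rewrite (eq_bigr (fun k => \sum_l deg gamma (phi k, psi l) * (deg c k / deg a (phi k)) * (deg d l / deg b (psi l)))); last first.
  by move=> k _; apply: eq_bigr => l _; rewrite degGam.
rewrite (sum_fib (fun g h => deg gamma (g, h)) (fun k g => deg c k / deg a g) (fun l h => deg d l / deg b h)).
rewrite (eq_bigr (fun g => \sum_h deg gamma (g, h))); last first.
  by move=> g _; apply: eq_bigr => h _; rewrite Sc Sd Ma Mb.
by rewrite -sum_pair; case: J => -[_ _ ->].
Qed.


Lemma P2 k : \sum_l deg Gam (k, l) = deg c k.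
Proof.
rewrite (eq_bigr (fun l => deg gamma (phi k, psi l) * (deg c k / deg a (phi k)) * (deg d l / deg b (psi l)))); last by move=> l _; rewrite degGam.
rewrite part_psi.
rewrite (eq_bigr (fun h => deg gamma (phi k, h) * (deg a (phi k))^-1 * deg c k)); last first.
  move=> h _; rewrite (eq_bigr (fun l => deg gamma (phi k, h) * (deg c k / deg a (phi k)) * (deg d l / deg b h))); last by move=> l /eqP ->.
  by rewrite -big_distrr /= Sd mulrAC Mb mulrA mulrAC.
rewrite -!big_distrl /=; case: J => _ -> _ _ _.
have [H|H] := eqVneq (deg a (phi k)) 0; first by rewrite (degal0 Wc Hdc H) mulr0.
by rewrite divff // mul1r.
Qed.

Lemma P3 l : \sum_k deg Gam (k, l) = deg d l.
Proof.
rewrite (eq_bigr (fun k => deg gamma (phi k, psi l) * (deg c k / deg a (phi k)) * (deg d l / deg b (psi l)))); last by move=> k _; rewrite degGam.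
rewrite part_phi.
rewrite (eq_bigr (fun g => deg gamma (g, psi l) * (deg b (psi l))^-1 * deg d l)); last first.
  move=> g _; rewrite (eq_bigr (fun k => deg gamma (g, psi l) * (deg c k / deg a g) * (deg d l / deg b (psi l)))); last by move=> k /eqP ->.
  by rewrite -big_distrl -big_distrr /= Sc Ma mulrA mulrAC.
rewrite -!big_distrl /=; case: J => _ _ -> _ _.
have [H|H] := eqVneq (deg b (psi l)) 0; first by rewrite (degal0 Wd Hdd H) mulr0.
by rewrite divff // mul1r.
Qed.


Lemma P4 k k' l : deg c k * (\sum_vt Gam (k, l) (k', vt)) = c k k' * deg Gam (k, l).
Proof.
rewrite degGam /Gam /= part_psi.
rewrite (eq_bigr (fun h' => gamma (phi k, psi l) (phi k', h') * (c k k' / a (phi k) (phi k')) * (deg d l / deg b (psi l)))); last first.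
  move=> h' _; rewrite (eq_bigr (fun vt => gamma (phi k, psi l) (phi k', h') * (c k k' / a (phi k) (phi k')) * (d l vt / b (psi l) h'))); last by move=> vt /eqP ->.
  by rewrite -big_distrr /= -big_distrl /= Ld.
rewrite -!big_distrl /=.
case: J => _ _ _ J4 _; have E := J4 (phi k) (phi k') (psi l).
have [H|H] := eqVneq (deg a (phi k)) 0.
  by rewrite (degal0 Wc Hdc H) H invr0 !(mul0r, mulr0).
have [H'|H'] := eqVneq (a (phi k) (phi k')) 0.
  by rewrite (al_be0 Wc Hdc Hfc H') H' invr0 !(mul0r, mulr0).
have ES : \sum_vt gamma (phi k, psi l) (phi k', vt) = a (phi k) (phi k') * deg gamma (phi k, psi l) / deg a (phi k).
  by rewrite -E [RHS]mulrC mulKf.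
have [Hb|Hb] := eqVneq (deg b (psi l)) 0; first by rewrite Hb invr0 !(mul0r, mulr0).
by rewrite ES; field; rewrite Hb H H'.
Qed.


Lemma P5 k l l' : deg d l * (\sum_ut Gam (k, l) (ut, l')) = d l l' * deg Gam (k, l).
Proof.
rewrite degGam /Gam /= part_phi.
rewrite (eq_bigr (fun g' => gamma (phi k, psi l) (g', psi l') * (deg c k / deg a (phi k)) * (d l l' / b (psi l) (psi l')))); last first.
  move=> g' _; rewrite (eq_bigr (fun ut => gamma (phi k, psi l) (g', psi l') * (c k ut / a (phi k) g') * (d l l' / b (psi l) (psi l')))); last by move=> ut /eqP ->.
  by rewrite -big_distrl /= -big_distrr /= -big_distrl /= Lc.
rewrite -!big_distrl /=.
case: J => _ _ _ _ J5; have E := J5 (phi k) (psi l) (psi l').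
have [H|H] := eqVneq (deg b (psi l)) 0.
  by rewrite (degal0 Wd Hdd H) H invr0 !(mul0r, mulr0).
have [H'|H'] := eqVneq (b (psi l) (psi l')) 0.
  by rewrite (al_be0 Wd Hdd Hfd H') H' invr0 !(mul0r, mulr0).
have ES : \sum_ut gamma (phi k, psi l) (ut, psi l') = b (psi l) (psi l') * deg gamma (phi k, psi l) / deg b (psi l).
  by rewrite -E [RHS]mulrC mulKf.
have [Ha|Ha] := eqVneq (deg a (phi k)) 0; first by rewrite Ha invr0 !(mul0r, mulr0).
by rewrite ES; field; rewrite Ha H H'.
Qed.

Lemma Gam_join : weight_joining c d Gam.
Proof.
split => //; [split => //| exact: P2 | exact: P3 | exact: P4 | exact: P5].
- exact: Gam_ge0.
- exact: Gam_sym.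
- exact: Gam_sum.
Qed.


Lemma push_deg g h : \sum_(k | phi k == g) \sum_(l | psi l == h) deg Gam (k, l) = deg gamma (g, h).
Proof.
rewrite (eq_bigr (fun k => \sum_(l | psi l == h) deg gamma (g, h) * (deg c k / deg a g) * (deg d l / deg b h))); last first.
  by move=> k /eqP <-; apply: eq_bigr => l /eqP <-; rewrite degGam.
rewrite (eq_bigr (fun k => deg gamma (g, h) * (deg c k / deg a g) * (deg b h / deg b h))); last first.
  by move=> k _; rewrite -big_distrr /= Sd.
by rewrite -big_distrl -big_distrr /= Sc Ma Mb.
Qed.

Lemma sum4 g g' h h' (X : UK -> UK -> R) (Y : UL -> UL -> R) :
  \sum_(k | phi k == g) \sum_(l | psi l == h) \sum_(k' | phi k' == g') \sum_(l' | psi l' == h') X k k' * Y l l'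
  = (\sum_(k | phi k == g) \sum_(k' | phi k' == g') X k k') * (\sum_(l | psi l == h) \sum_(l' | psi l' == h') Y l l').
Proof.
rewrite big_distrl /=; apply: eq_bigr => k _.
rewrite big_distrl /= exchange_big /=; apply: eq_bigr => k' _.
rewrite big_distrr /=; apply: eq_bigr => l _.
by rewrite big_distrr.
Qed.

Lemma push g g' h h' :
  \sum_(k | phi k == g) \sum_(l | psi l == h) \sum_(k' | phi k' == g') \sum_(l' | psi l' == h') Gam (k, l) (k', l')
  = gamma (g, h) (g', h').
Proof.
rewrite (eq_bigr (fun k => \sum_(l | psi l == h) \sum_(k' | phi k' == g') \sum_(l' | psi l' == h')
   (gamma (g, h) (g', h') * (c k k' / a g g')) * (d l l' / b h h'))); last first.
  move=> k /eqP <-; apply: eq_bigr => l /eqP <-; apply: eq_bigr => k' /eqP <-.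
  by apply: eq_bigr => l' /eqP <-.
rewrite sum4.
rewrite (eq_bigr (fun k => gamma (g, h) (g', h') * ((\sum_(k' | phi k' == g') c k k') / a g g'))); last first.
  by move=> k _; rewrite -big_distrr /= -big_distrl.
rewrite -big_distrr /= -big_distrl /= (fibsum2 Wc Wa Hdc Hfc).
rewrite (eq_bigr (fun l => (\sum_(l' | psi l' == h') d l l') / b h h')); last first.
  by move=> l _; rewrite -big_distrl.
rewrite -big_distrl /= (fibsum2 Wd Wb Hdd Hfd).
have [H|H] := eqVneq (a g g') 0; first by rewrite (gam_a0 J) // !mul0r.
have [H'|H'] := eqVneq (b h h') 0; first by rewrite (gam_b0 J) // !mul0r.
by rewrite !divff // !mulr1.
Qed.

End Lift.

Theorem proposition4p4 (R : realFieldType) (UG UH UK UL : finType)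
  (a : UG -> UG -> R) (b : UH -> UH -> R) (c : UK -> UK -> R) (d : UL -> UL -> R) :
  is_weight a -> is_weight b -> is_weight c -> is_weight d ->
  gdiv c a -> gdiv d b ->
  (strongly_disjoint c d -> strongly_disjoint a b) /\
  (weakly_disjoint c d -> weakly_disjoint a b).
Proof.
move=> Wa Wb Wc Wd [phi [_ Hdc Hfc]] [psi [_ Hdd Hfd]]; split.
- move=> SD gamma J [g h] [g' h'].
  have GJ := Gam_join Wa Wb Wc Wd Hdc Hfc Hdd Hfd J.
  rewrite -(push Wa Wb Wc Wd Hdc Hfc Hdd Hfd J).
  rewrite (eq_bigr (fun k => \sum_(l | psi l == h) \sum_(k' | phi k' == g') \sum_(l' | psi l' == h') c k k' * d l l')); last first.
    move=> k _; apply: eq_bigr => l _; apply: eq_bigr => k' _; apply: eq_bigr => l' _.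
    by rewrite (SD _ GJ).
  by rewrite sum4 (fibsum2 Wc Wa Hdc Hfc) (fibsum2 Wd Wb Hdd Hfd).
- move=> WD gamma J g h.
  have GJ := Gam_join Wa Wb Wc Wd Hdc Hfc Hdd Hfd J.
  rewrite -(push_deg Wc Wd Hdc Hfc Hdd Hfd J).
  rewrite (eq_bigr (fun k => deg c k * \sum_(l | psi l == h) deg d l)); last first.
    by move=> k _; rewrite big_distrr /=; apply: eq_bigr => l _; rewrite (WD _ GJ).
  by rewrite -big_distrl /= -Hdc -Hdd.
Qed.
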